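(* Let $\theta>1$, $r\in(\theta^{-1},\theta^{-1/2}]$, $\rho\in(0,1]$, and $s=\frac1\rho\big(\frac{\ln\theta}{\ln(r\theta)}-2\big)$. Then \[ \max_{z\in[\frac1r,\ \frac1r+\rho(\theta-\frac1r)]}\frac{\Phi^\rho_r(z)^{s+1}}{z^{s}}\ \le\ r\theta. \]
   Context: Let $\varphi_r(z)=\frac{r\theta-1}{1-r}+\frac{1-r^2\theta}{1-r}\cdot\frac{z}{r\theta}$ (the line through $(r\theta,r\theta)$ and $(\theta,1/r)$). For $\rho\in(0,1]$ define $\Phi^\rho_r:[1,\theta]\to[1,\theta]$ by \[ \Phi^\rho_r(y)=\begin{cases} r\theta & y\in[1,r\theta)\\ \varphi_r(y) & y\in[r\theta,\tfrac1r)\\ \varphi_r(\tfrac1r)+\big(\tfrac1r-\varphi_r(\tfrac1r)\big)\dfrac{y-\tfrac1r}{\rho(\theta-\tfrac1r)} & y\in[\tfrac1r,\tfrac1r+\rho(\theta-\tfrac1r))\\ \tfrac1r & y\in[\tfrac1r+\rho(\theta-\tfrac1r),\theta].\end{cases} \] *)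

(* Defs.v *)
From Stdlib Require Import Reals.
Open Scope R_scope.

(* varphi_r(z): the line through (r theta, r theta) and (theta, 1/r). *)
Definition varphi (theta r z : R) : R :=
  (r * theta - 1) / (1 - r) + (1 - r ^ 2 * theta) / (1 - r) * (z / (r * theta)).

Definition Phi (theta r rho y : R) : R :=
  if Rlt_dec y (r * theta) then r * theta
  else if Rlt_dec y (/ r) then varphi theta r y
  else if Rlt_dec y (/ r + rho * (theta - / r)) then
    varphi theta r (/ r)
    + (/ r - varphi theta r (/ r)) * ((y - / r) / (rho * (theta - / r)))
  else / r.

(* Main.v *)
Require Import Defs.
From Stdlib Require Import Reals Lra.
Open Scope R_scope.

Lemma exp_le (x y : R) : x <= y -> exp x <= exp y.
Proof. intros [H|H]. left; apply exp_increasing; auto. subst; lra. Qed.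

Lemma bern (p y : R) : 0 <= p <= 1 -> exp (p * y) <= 1 + p * (exp y - 1).
Proof.
  intros Hp.
  set (h := fun t => p * exp t + (1 - p) - exp (p * t)).
  assert (Hd : forall t, derivable_pt_lim h t (p * (exp t - exp (p * t)))).
  { intro t. unfold h.
    assert (Hc : derivable_pt_lim (fun t => exp (p * t)) t (exp (p * t) * (p * 1))).
    { apply (derivable_pt_lim_comp (fun t => p * t) exp).
      + apply derivable_pt_lim_scal. apply derivable_pt_lim_id.
      + apply derivable_pt_lim_exp. }
    replace (p * (exp t - exp (p * t))) with (p * exp t + 0 - exp (p * t) * (p * 1)) by ring.
    apply derivable_pt_lim_minus.
    - apply derivable_pt_lim_plus.
      + apply derivable_pt_lim_scal. apply derivable_pt_lim_exp.
      + apply derivable_pt_lim_const.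
    - exact Hc. }
  set (pr := fun t => exist (fun l => derivable_pt_abs h t l) _ (Hd t) : derivable_pt h t).
  assert (h0 : h 0 = 0). { unfold h. rewrite Rmult_0_r, exp_0. ring. }
  assert (h y >= 0).
  { destruct (Rtotal_order y 0) as [Hy|[Hy|Hy]].
    - destruct (MVT_cor1 h y 0 pr Hy) as [c [Hc Hc2]].
      simpl in Hc.
      assert (exp c <= exp (p * c)). { apply exp_le. nra. }
      assert (p * (exp c - exp (p * c)) <= 0) by nra.
      nra.
    - subst. lra.
    - destruct (MVT_cor1 h 0 y pr Hy) as [c [Hc Hc2]].
      simpl in Hc.
      assert (exp (p*c) <= exp c). { apply exp_le. nra. }
      assert (p * (exp c - exp (p * c)) >= 0) by nra.
      nra. }
  unfold h in H. lra.
Qed.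

Lemma ln_le' (x y : R) : 0 < x -> x <= y -> ln x <= ln y.
Proof. intros Hx [H|H]. left; apply ln_increasing; auto. subst; lra. Qed.

Lemma concav (p l x y : R) : 0 <= p <= 1 -> 0 <= l <= 1 -> 0 < x -> 0 < y ->
  (1 - l) * exp (p * ln x) + l * exp (p * ln y) <= exp (p * ln ((1 - l) * x + l * y)).
Proof.
  intros Hp Hl Hx Hy.
  set (m := (1 - l) * x + l * y).
  assert (Hm : 0 < m) by (unfold m; nra).
  assert (K : forall u, 0 < u -> exp (p * ln u) <= exp (p * ln m) * (1 + p * (u / m - 1))).
  { intros u Hu.
    replace (p * ln u) with (p * ln m + p * (ln u - ln m)) by ring.
    rewrite exp_plus.
    apply Rmult_le_compat_l. left; apply exp_pos.
    replace (u / m) with (exp (ln u - ln m)).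
    apply bern; auto.
    unfold Rminus. rewrite exp_plus, exp_Ropp, !exp_ln; auto. }
  pose proof (K x Hx). pose proof (K y Hy).
  assert (E : (1 - l) * (1 + p * (x / m - 1)) + l * (1 + p * (y / m - 1)) = 1).
  { unfold m in *. field. lra. }
  pose proof (exp_pos (p * ln m)).
  transitivity (exp (p * ln m) * ((1 - l) * (1 + p * (x / m - 1)) + l * (1 + p * (y / m - 1)))).
  - nra.
  - rewrite E. lra.
Qed.


Theorem corollary4 (theta r rho s : R) :
  1 < theta ->
  / theta < r -> r <= Rpower theta (- (1 / 2)) ->
  0 < rho -> rho <= 1 ->
  s = / rho * (ln theta / ln (r * theta) - 2) ->
  forall z : R, / r <= z <= / r + rho * (theta - / r) ->
    Rpower (Phi theta r rho z) (s + 1) / Rpower z s <= r * theta.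
Proof.
  intros Ht Hr1 Hr2 Hp0 Hp1 Hs z Hz.
  assert (Hr0 : 0 < r). { assert (0 < / theta) by (apply Rinv_0_lt_compat; lra). lra. }
  assert (Hrr : r * r * theta <= 1).
  { assert (r * r <= Rpower theta (- (1/2)) * Rpower theta (- (1/2))) by nra.
    rewrite <- Rpower_plus in H.
    replace (- (1/2) + - (1/2)) with (Ropp 1) in H by field.
    rewrite Rpower_Ropp, Rpower_1 in H by lra.
    apply Rmult_le_compat_r with (r := theta) in H; [|lra].
    rewrite Rinv_l in H; lra. }
  assert (Hrl1 : r < 1). { assert (r * r < 1) by nra. nra. }
  set (a := r * theta) in *.
  set (b := / r) in *.
  set (e := b + rho * (theta - b)) in *.
  assert (Ha1 : 1 < a). { unfold a. apply Rmult_lt_compat_r with (r := theta) in Hr1; [|lra].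
    rewrite Rinv_l in Hr1; lra. }
  assert (Hbr : b * r = 1) by (unfold b; field; lra).
  assert (Hab : a <= b). { unfold a. nra. }
  assert (Hth : theta = a * b) by (unfold a, b; field; lra).
  assert (Hbt : b < theta) by nra.
  assert (Heb : b < e) by (unfold e; nra).
  assert (He : e = b * (1 + rho * (a - 1))) by (unfold e; rewrite Hth; ring).
  assert (Hla : 0 < ln a) by (rewrite <- ln_1; apply ln_increasing; lra).
  assert (Hlab : ln a <= ln b) by (apply ln_le'; lra).
  assert (Hs' : s = (ln b - ln a) / (rho * ln a)).
  { rewrite Hs, Hth, ln_mult by lra. field. lra. }
  assert (Hs0 : 0 <= s). { rewrite Hs'. unfold Rdiv. apply Rmult_le_pos. lra. left; apply Rinv_0_lt_compat; nra. }
  assert (Hz0 : 0 < z) by lra.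
  assert (Hend : (s + 1) * ln b <= ln a + s * ln e).
  { assert (B : rho * ln a <= ln (1 + rho * (a - 1))).
    { pose proof (bern rho (ln a) ltac:(lra)). rewrite exp_ln in H by lra.
      rewrite <- (ln_exp (rho * ln a)). apply ln_le'; auto. apply exp_pos. }
    rewrite He, ln_mult by nra.
    assert (s * (rho * ln a) = ln b - ln a) by (rewrite Hs'; field; lra).
    nra. }
  set (L := a + (b - a) / (e - a) * (z - a)).
  assert (HPhi : 0 < Phi theta r rho z /\ Phi theta r rho z <= L).
  { unfold Phi. fold a b.
    destruct (Rlt_dec z a); [lra|].
    destruct (Rlt_dec z b); [lra|].
    replace (rho * (theta - b)) with (e - b) by (unfold e; ring).
    idtac.
    replace (b + (e - b)) with e by ring.
    assert (Hea : 0 < e - a) by lra.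
    assert (Heth : e <= theta) by (unfold e; nra).
    assert (Hc : varphi theta r b = a + (b - a) * (b - a) / (theta - a)).
    { unfold varphi, a, b. field. repeat split; try lra. 
      intro H0. assert (theta * (1 - r) = 0) by lra. nra. }
    set (Lb := a + (b - a) / (e - a) * (b - a)).
    assert (HcL : varphi theta r b <= Lb).
    { rewrite Hc. unfold Lb.
      assert (/ (theta - a) <= / (e - a)) by (apply Rinv_le_contravar; lra).
      unfold Rdiv. assert (0 <= (b - a) * (b - a)) by nra. nra. }
    assert (HL : L = Lb + (b - Lb) * ((z - b) / (e - b))).
    { unfold L, Lb. field. lra. }
    destruct (Rlt_dec z e).
    - rewrite HL.
      set (mu := (z - b) / (e - b)).
      assert (mu <= 1). { unfold mu. apply Rmult_le_reg_r with (e - b); [lra|].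
        unfold Rdiv. rewrite Rmult_assoc, Rinv_l by lra. lra. }
      assert (0 <= mu) by (unfold mu; unfold Rdiv; apply Rmult_le_pos; [lra| left; apply Rinv_0_lt_compat; lra]).
      assert (Lb <= b). { unfold Lb. assert ((b - a) / (e - a) <= 1).
        { apply Rmult_le_reg_r with (e - a); [lra|]. unfold Rdiv. rewrite Rmult_assoc, Rinv_l by lra. lra. }
        nra. }
      assert (a <= varphi theta r b). { rewrite Hc. assert (0 <= (b - a) * (b - a) / (theta - a)).
        { unfold Rdiv. apply Rmult_le_pos. nra. left; apply Rinv_0_lt_compat; lra. } lra. }
      split; nra.
    - assert (z = e) by lra. unfold L. subst z. split. lra. right. field. lra. }
  destruct HPhi as [HP0 HPL].
  set (q := 1 / (s + 1)). set (p := s / (s + 1)).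
  set (lam := (z - a) / (e - a)).
  assert (Hea : 0 < e - a) by lra.
  assert (Hlam : 0 <= lam <= 1).
  { unfold lam. split. unfold Rdiv; apply Rmult_le_pos; [lra| left; apply Rinv_0_lt_compat; lra].
    apply Rmult_le_reg_r with (e - a); [lra|]. unfold Rdiv. rewrite Rmult_assoc, Rinv_l by lra. lra. }
  assert (Hzl : z = (1 - lam) * a + lam * e) by (unfold lam; field; lra).
  assert (HLl : L = (1 - lam) * a + lam * b) by (unfold L, lam; field; lra).
  assert (Hp : 0 <= p <= 1). { unfold p. split. unfold Rdiv; apply Rmult_le_pos; [lra| left; apply Rinv_0_lt_compat; lra].
    apply Rmult_le_reg_r with (s + 1); [lra|]. unfold Rdiv. rewrite Rmult_assoc, Rinv_l by lra. lra. }
  assert (Hpq : q + p = 1) by (unfold p, q; field; lra).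
  pose proof (concav p lam a e Hp Hlam ltac:(lra) ltac:(lra)) as Hcv.
  rewrite <- Hzl in Hcv.
  assert (Hqa : exp (q * ln a) * exp (p * ln a) = a).
  { rewrite <- exp_plus. replace (q * ln a + p * ln a) with ((q + p) * ln a) by ring.
    rewrite Hpq, Rmult_1_l. apply exp_ln; lra. }
  assert (Hqe : b <= exp (q * ln a) * exp (p * ln e)).
  { rewrite <- exp_plus. rewrite <- (exp_ln b) at 1 by lra. apply exp_le.
    unfold q, p. apply Rmult_le_reg_r with (s + 1); [lra|].
    replace ((1 / (s + 1) * ln a + s / (s + 1) * ln e) * (s + 1)) with (ln a + s * ln e) by (field; lra).
    lra. }
  assert (HG : L <= exp (q * ln a + p * ln z)).
  { rewrite exp_plus. pose proof (exp_pos (q * ln a)).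
    apply Rle_trans with (exp (q * ln a) * ((1 - lam) * exp (p * ln a) + lam * exp (p * ln e))).
    - rewrite HLl. nra.
    - apply Rmult_le_compat_l; lra. }
  assert (Hln : ln (Phi theta r rho z) <= q * ln a + p * ln z).
  { rewrite <- (ln_exp (q * ln a + p * ln z)). apply ln_le'; lra. }
  assert (Hln2 : (s + 1) * ln (Phi theta r rho z) <= ln a + s * ln z).
  { replace (ln a + s * ln z) with ((q * ln a + p * ln z) * (s + 1)) by (unfold q, p; field; lra).
    rewrite Rmult_comm. apply Rmult_le_compat_r; lra. }
  unfold Rpower. unfold Rdiv. rewrite <- exp_Ropp, <- exp_plus.
  rewrite <- (exp_ln a) by lra. apply exp_le. lra.
Qed.
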